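(* Let $G$ and $H$ be two connected nontrivial graphs. If $S$ is a cycle hull set of $G\Box H$, then $\pi_G(S)$ and $\pi_H(S)$ are cycle hull sets of $G$ and $H$ respectively.
   Context: All graphs are finite, simple and undirected. For a graph $G$ and $S\subseteq V(G)$, the cycle interval $\langle S\rangle$ consists of the vertices of $S$ together with every vertex $w\in V(G)\setminus S$ such that $G[S\cup\{w\}]$ contains a cycle through $w$; $S$ is cycle convex if $\langle S\rangle=S$; the cycle convex hull $\langle S\rangle_C$ is the smallest cycle convex set containing $S$; $S$ is a cycle hull set if $\langle S\rangle_C=V(G)$. The Cartesian product $G\Box H$ has vertex set $V(G)\times V(H)$, with $(g_1,h_1)\sim(g_2,h_2)$ iff ($g_1\sim g_2$ and $h_1=h_2$) or ($g_1=g_2$ and $h_1\sim h_2$). For $S\subseteq V(G)\times V(H)$, $\pi_G(S)=\{g:(g,h)\in S\text{ for some }h\}$ and $\pi_H(S)=\{h:(g,h)\in S\text{ for some }g\}$. A graph is nontrivial if it has at least two vertices. *)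

(* Defs.v *)
From mathcomp Require Import all_boot.
From mathcomp Require Import boolp.
Set Implicit Arguments. Unset Strict Implicit. Unset Printing Implicit Defensive.

(* A finite simple graph: vertex type T : finType, edge relation e : rel T
   assumed symmetric and irreflexive (hypotheses stated in the theorem). *)

Section CycleConvexity.
Variables (T : finType) (e : rel T).

Definition is_graph_cycle (c : seq T) : bool :=
  [&& 2 < size c, uniq c & cycle e c].

Definition cycle_through_in (A : {set T}) (w : T) : Prop :=
  exists c : seq T, [/\ is_graph_cycle c, w \in c & {subset c <= A}].

Definition cycle_interval (S : {set T}) : {set T} :=
  S :|: [set w | (w \notin S) && asbool (cycle_through_in (w |: S) w)].

Definition cycle_convex (S : {set T}) : Prop := cycle_interval S = S.

Definition cycle_hull (S : {set T}) : {set T} :=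
  \bigcap_(U : {set T} | (S \subset U) && asbool (cycle_convex U)) U.

Definition cycle_hull_set (S : {set T}) : Prop := cycle_hull S = setT.

End CycleConvexity.

Definition box_rel (T1 T2 : finType) (e1 : rel T1) (e2 : rel T2) : rel (T1 * T2) :=
  fun x y => (e1 x.1 y.1 && (x.2 == y.2)) || ((x.1 == y.1) && e2 x.2 y.2).

Definition projG (T1 T2 : finType) (S : {set T1 * T2}) : {set T1} := [set x.1 | x in S].
Definition projH (T1 T2 : finType) (S : {set T1 * T2}) : {set T2} := [set x.2 | x in S].

Definition connected_graph (T : finType) (e : rel T) : Prop := forall x y, connect e x y.

(* Main.v *)
Require Import Defs.
From mathcomp Require Import all_boot.
From mathcomp Require Import boolp.

Section Gen.
Variables (T T1 : finType) (eT : rel T) (e1 : rel T1) (f : T -> T1).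
Hypothesis sym1 : symmetric e1.
Hypothesis fedge : forall x y, eT x y -> f x = f y \/ e1 (f x) (f y).
Hypothesis fdist : forall w x y, eT w x -> eT y w -> f x != f w -> f y != f w ->
  x != y -> f x != f y.
Variable U : {set T1}.

Let er := [rel a b | e1 a b && (b \in U)].

Lemma walk_conn p x : path eT x p -> all (fun z => f z \in U) p ->
  connect er (f x) (f (last x p)).
Proof.
elim: p x => [|z p IH] x /=; first by rewrite connect0.
case/andP=> exz pz /andP[fz ap].
have := IH _ pz ap.
case: (fedge _ _ exz) => [->|ez] //.
apply: connect_trans; apply: connect1 => /=; by rewrite ez fz.
Qed.

Lemma path_er_in a p : path er a p -> all (fun z => z \in U) p.
Proof.
elim: p a => [|z p IH] a //= /andP[/andP[_ ->] pz] /=; exact: IH pz.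
Qed.

Lemma cyc_proj0 (w : T) (p : seq T) : is_graph_cycle eT (w :: p) ->
  all (fun z => f z \in U) p -> f w \notin U ->
  cycle_through_in e1 (f w |: U) (f w).
Proof.
case/and3P=> sz uc cc ap fwU.
case: p sz uc cc ap => [|x [|z s]] //= _ /andP[wn /andP[xn us]].
move=> /and3P[ewx exz]; rewrite rcons_path => /andP[pzs eyw].
have pxs : path eT x (z :: s) by rewrite /= exz.
move=> /and3P[fx fz aps].
set y := last z s in eyw.
have ay : all (fun z => f z \in U) (z :: s) by rewrite /= fz.
have yin : y \in z :: s by exact: mem_last.
have fy : f y \in U by move/allP: ay => /(_ _ yin).
have fxw : f x != f w by apply: contraNneq fwU => <-.
have fyw : f y != f w by apply: contraNneq fwU => <-.
have xy : x != y by apply: contraNneq xn => ->.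
have fxy := fdist _ _ _ ewx eyw fxw fyw xy.
have e_wx : e1 (f w) (f x).
  by case: (fedge _ _ ewx) => // E; rewrite E eqxx in fxw.
have e_yw : e1 (f y) (f w).
  by case: (fedge _ _ eyw) => // E; rewrite E eqxx in fyw.
have cn := walk_conn (z :: s) x pxs ay.
have [q' [Pq' Uq' Lq']] : exists q', [/\ path er (f x) q', uniq (f x :: q') & last (f x) q' = f y].
  case/connectP: cn => q Pq Ey; rewrite [f y]Ey.
  by case: (shortenP Pq) => q'' P'' U'' _; exists q''.
have inU : all (fun z => z \in U) (f x :: q') by rewrite /= fx (path_er_in (f x) q' Pq').
have fwn : f w \notin f x :: q'.
  apply/negP => /(allP inU) => H; by rewrite H in fwU.
exists (f w :: f x :: q'); split.
- case: q' Pq' Uq' Lq' inU fwn => [|a q0] Pq' Uq' Lq' inU fwn.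
    by rewrite /= in Lq'; rewrite Lq' eqxx in fxy.
  have P : path e1 (f x) (rcons (a :: q0) (f w)).
    rewrite rcons_path Lq' e_yw andbT.
    by apply: sub_path Pq' => u v /andP[].
  move: P => /= /andP[P1 P2].
  rewrite /is_graph_cycle /=.
  apply/and4P; split => //.
  by move: Uq' => /= ->; rewrite andbT; move: fwn; rewrite !inE.
- exact: mem_head.
- move=> u; rewrite inE => /orP[/eqP ->|H]; first by rewrite setU11.
  by rewrite setU1r // (allP inU).
Qed.

Lemma cyc_proj (w : T) (c : seq T) : is_graph_cycle eT c -> w \in c ->
  {subset c <= w |: (f @^-1: U)} -> f w \notin U ->
  cycle_through_in e1 (f w |: U) (f w).
Proof.
move=> gc wc sub fwU.
case/splitPr: c / wc gc sub => p1 p2 gc sub.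
have E : w :: p2 ++ p1 = rot (size p1) (p1 ++ w :: p2) by rewrite rot_size_cat.
have gc' : is_graph_cycle eT (w :: p2 ++ p1).
  by move: gc; rewrite E /is_graph_cycle size_rot rot_uniq rot_cycle.
apply: (cyc_proj0 _ _ gc') => //.
apply/allP => z zin.
have zw : z != w.
  move: gc' => /and3P[_ /= /andP[wn _] _]; by apply: contraNneq wn => <-.
have : z \in p1 ++ w :: p2 by rewrite -(mem_rot (size p1)) -E inE zin orbT.
move/sub; rewrite !inE (negbTE zw) /=.
done.
Qed.

Lemma lift_convex : cycle_convex e1 U -> cycle_convex eT (f @^-1: U).
Proof.
move=> cU; apply/setP => w; rewrite /cycle_interval in_setU.
case: (boolP (w \in f @^-1: U)) => //= wn.
rewrite inE wn /=; apply/negbTE/asboolP => -[c [gc wc sub]].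
have fwU : f w \notin U by rewrite inE in wn.
have := cyc_proj _ _ gc wc sub fwU.
move=> H; move/setP: cU => /(_ (f w)).
rewrite /cycle_interval in_setU (negbTE fwU) /= inE fwU /=; by move/asboolP: H => ->.
Qed.
End Gen.

Lemma hull_proj (T T1 : finType) (eT : rel T) (e1 : rel T1) (f : T -> T1)
  (fedge : forall x y, eT x y -> f x = f y \/ e1 (f x) (f y))
  (fdist : forall w x y, eT w x -> eT y w -> f x != f w -> f y != f w ->
     x != y -> f x != f y)
  (surj : forall g, exists x, f x = g) (S : {set T}) :
  cycle_hull_set eT S -> cycle_hull_set e1 (f @: S).
Proof.
move=> hS; apply/setP => g; rewrite inE.
apply/bigcapP => U /andP[sub /asboolP cU].
have [x <-] := surj g.
have : x \in cycle_hull eT S by rewrite hS inE.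
move/bigcapP => /(_ (f @^-1: U)); rewrite inE; apply.
apply/andP; split.
  apply/subsetP => y yS; rewrite inE; apply: (subsetP sub); exact: imset_f.
apply/asboolP; exact: (lift_convex _ _ _ _ _ fedge fdist U cU).
Qed.

Theorem mainTheorem5 (T1 T2 : finType) (e1 : rel T1) (e2 : rel T2)
  (sym1 : symmetric e1) (irr1 : irreflexive e1)
  (sym2 : symmetric e2) (irr2 : irreflexive e2)
  (conn1 : connected_graph e1) (conn2 : connected_graph e2)
  (nt1 : 1 < #|T1|) (nt2 : 1 < #|T2|)
  (S : {set T1 * T2}) :
  cycle_hull_set (box_rel e1 e2) S ->
  cycle_hull_set e1 (projG S) /\ cycle_hull_set e2 (projH S).
Proof.
move=> hS.
have [g0 _] : exists g : T1, g \in T1 by apply/card_gt0P; exact: ltnW.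
have [h0 _] : exists h : T2, h \in T2 by apply/card_gt0P; exact: ltnW.
split.
- apply: (hull_proj _ _ _ _ fst _ _ _ S hS).
  + move=> [x1 x2] [y1 y2] /=; rewrite /box_rel /=.
    case/orP=> /andP[A B]; [by right | by left; apply/eqP].
  + move=> [w1 w2] [x1 x2] [y1 y2]; rewrite /box_rel /=.
    case/orP=> /andP[A B]; last by rewrite (eqP A) eqxx.
    case/orP=> /andP[C D]; last by rewrite (eqP C) eqxx.
    move=> _ _; rewrite -(eqP B) (eqP D); apply: contra => /eqP ->; done.
  + by move=> g; exists (g, h0).
- apply: (hull_proj _ _ _ _ snd _ _ _ S hS).
  + move=> [x1 x2] [y1 y2] /=; rewrite /box_rel /=.
    case/orP=> /andP[A B]; [by left; apply/eqP | by right].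
  + move=> [w1 w2] [x1 x2] [y1 y2]; rewrite /box_rel /=.
    case/orP=> /andP[A B]; first by rewrite (eqP B) eqxx.
    case/orP=> /andP[C D]; first by rewrite (eqP D) eqxx.
    move=> _ _; rewrite -(eqP A) (eqP C); apply: contra => /eqP ->; done.
  + by move=> h; exists (g0, h).
Qed.
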